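(* Let $n$ and $a$ be positive integers with $n \equiv 0 \pmod 4$, $a \equiv 0 \pmod 4$, $0 < a < n$, and such that $p = \frac{a}{4} + \frac{n}{4}$ is a prime number. Let $$\Sigma = \{x = (x_1,\dots,x_n) : x_i \in \{-1,1\} \text{ for all } i,\ x_1 = 1,\ x_1+\dots+x_n = 0\}.$$ If $Q \subset \Sigma$ satisfies $|Q| > \sum_{i=0}^{p-1}\binom{n}{i}$, then there exist $x, y \in Q$ with $(x,y) = -a$, where $(\cdot,\cdot)$ is the standard inner product on $\mathbb{R}^n$. *)

(* Defs.v *)
From HB Require Import structures.
From mathcomp Require Import all_boot all_order all_algebra.
Set Implicit Arguments. Unset Strict Implicit. Unset Printing Implicit Defensive.
Import Order.TTheory GRing.Theory Num.Theory.

(* Vectors in Z^n (subset of R^n) indexed by 'I_n (coordinate i+1 is index i). *)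
Definition vec (n : nat) := {ffun 'I_n -> int}.

Definition ip (n : nat) (x y : vec n) : int := (\sum_(i < n) x i * y i)%R.

Definition inSigma (n : nat) (x : vec n) : Prop :=
  (forall i : 'I_n, x i = 1%R \/ x i = (-1)%R) /\
  (forall i : 'I_n, val i = 0%N -> x i = 1%R) /\
  (\sum_(i < n) x i)%R = 0%R.

(* Main.v *)
Require Import Defs.
From HB Require Import structures.
From mathcomp Require Import all_boot all_order all_algebra.
Import Order.TTheory GRing.Theory Num.Theory.
From Stdlib Require Import Lia.
Set Implicit Arguments. Unset Strict Implicit. Unset Printing Implicit Defensive.
Lemma not_dvd_fact p : prime p -> ~~ (p %| (p.-1)`!).
Proof.
move=> pp; have p1 := prime_gt1 pp.
have h2 : p %| ((p.-1)`!).+1 by rewrite -(Wilson p1).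
apply/negP => h; move: h2; rewrite -addn1 (dvdn_addr 1 h) dvdn1 => /eqP e.
by rewrite e in p1.
Qed.

Lemma dvd_ffact p u : prime p -> (p %| u ^_ p.-1) = ~~ (p %| u.+1).
Proof.
move=> pp; have p1 := prime_gt1 pp.
rewrite ffact_prod (Euclid_dvd_prod _ _ _ pp).
apply/idP/idP.
- elim/big_ind: _.
  + by [].
  + by move=> x y hx hy /orP[/hx|/hy].
  move=> [i /= ilt] _ hi; apply/negP => hu.
  have ip : i.+1 < p by rewrite -ltn_predRL.
  have [ui|iu] := leqP u i.
    move: hu => /(dvdn_leq (ltn0Sn _)); rewrite leqNgt.
    by rewrite (leq_ltn_trans _ ip) // ltnS.
  have := dvdn_sub hu hi; rewrite subSn ?leq_subr // (subKn (ltnW iu)).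
  move=> /(dvdn_leq (ltn0Sn _)). by rewrite leqNgt ip.
- move=> hu; have m0 : 0 < u.+1 %% p.
    by rewrite lt0n; apply: contra hu => /eqP h; rewrite /dvdn h.
  have ilt : (u.+1 %% p).-1 < p.-1.
    by rewrite -ltnS (prednK m0) (prednK (prime_gt0 pp)) ltn_pmod // prime_gt0.
  rewrite (bigD1 (Ordinal ilt)) ?inE //=.
  apply/orP; left.
  have e : u - (u.+1 %% p).-1 = u.+1 - u.+1 %% p.
    by rewrite -{2}(prednK m0) subSS.
  rewrite e {1}(divn_eq u.+1 p) addnK; exact: dvdn_mull.
Qed.

Lemma dvd_bin p u : prime p -> (p %| 'C(u, p.-1)) = ~~ (p %| u.+1).
Proof.
move=> pp; rewrite -dvd_ffact // -bin_ffact Euclid_dvdM //.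
by rewrite (negbTE (not_dvd_fact pp)) orbF.
Qed.
Lemma sum_ind_ord k (x : nat) (f : nat -> nat) :
  \sum_(s < k) (x == s :> nat) * f s = (x < k) * f x.
Proof.
elim: k => [|k IH]; first by rewrite big_ord0.
rewrite big_ord_recr /= IH.
case: (ltngtP x k) => [h|h|->].
- by rewrite mul0n addn0 ltnS (ltnW h).
- by rewrite mul0n addn0 ltnS leqNgt h.
- by rewrite ltnSn.
Qed.

Lemma sum_subsets (T : finType) (Z : {set T}) k (f : nat -> nat) :
  \sum_(S : {set T} | (S \subset Z) && (#|S| < k)) f #|S| = \sum_(s < k) f s * 'C(#|Z|, s).
Proof.
rewrite big_mkcond /=.
transitivity (\sum_(S : {set T}) \sum_(s < k) ((S \subset Z) && (#|S| == s :> nat)) * f s).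
  apply: eq_bigr => S _; case: (S \subset Z) => /=; last by rewrite big1.
  by rewrite sum_ind_ord; case: (_ < k); rewrite ?mul1n ?mul0n.
rewrite exchange_big /=; apply: eq_bigr => s _.
rewrite -cards_draws -sum1_card big_distrr /= [RHS]big_mkcond /=.
apply: eq_bigr => S _; rewrite inE; case: (_ && _); by rewrite ?muln1 ?mul1n ?muln0 ?mul0n.
Qed.
Lemma offdiag_arith p q r t : p = (r + q)%N -> (0 < r)%N -> (t < q * 2)%N ->
  (t * 4 + r * 4 != q * 4)%N -> ~~ (p %| (t + p.-1 * (q * 2).+1).+1)%N.
Proof.
move=> pE r0 tq ne; apply/negP => hd.
have p0 : (0 < p)%N by rewrite pE addn_gt0 r0.
have sumE : ((t + p.-1 * (q * 2).+1).+1 + (q * 2 - t) = p * (q * 2).+1)%N.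
  rewrite -{2}(prednK p0) mulSn.
  move: tq => /ssrnat.ltP tq; rewrite -?plusE -?multE -?minusE in tq *; lia.
have : (p %| q * 2 - t)%N by rewrite -(dvdn_addr _ hd) sumE dvdn_mulr.
case/dvdnP => k hk.
move: hk ne tq r0; case: k => [|[|k]]; rewrite ?mul0n ?mul1n ?mulSn => hk /eqP ne /ssrnat.ltP tq /ssrnat.ltP r0;
  rewrite -?plusE -?multE -?minusE in hk ne tq r0 pE; lia.
Qed.
Lemma diag_arith p q : (0 < p)%N -> (p %| (q * 2 + p.-1 * (q * 2).+1).+1)%N.
Proof. by move=> p0; rewrite -addSn -mulSn prednK // dvdn_mulr. Qed.
Local Open Scope ring_scope.
Definition Pset n (x : vec n) : {set 'I_n} := [set i | x i == 1].

Lemma card_sum n (A : {set 'I_n}) : (\sum_(i < n) ((i \in A) : nat))%N = #|A|.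
Proof. by rewrite -sum1_card [RHS]big_mkcond; apply: eq_bigr => i _; case: (i \in A). Qed.

Lemma sigma_val n (x : vec n) : inSigma x -> forall i,
  x i = ((i \in Pset x) : nat)%:R *+ 2 - 1.
Proof.
move=> [h _] i; rewrite inE; case: (h i) => ->; first by rewrite eqxx.
by rewrite (_ : (-1 == 1 :> int) = false).
Qed.

Lemma sigma_card n (x : vec n) : inSigma x -> (#|Pset x| * 2)%N = n.
Proof.
move=> hx; have [_ [_ s0]] := hx.
move: s0; rewrite (eq_bigr _ (fun i _ => sigma_val hx i)) sumrB sumr_const card_ord.
rewrite sumrMnl -natr_sum card_sum -mulrnA => /eqP; rewrite subr_eq0 eqr_nat.
by move=> /eqP.
Qed.
Lemma ip_sigma n (x y : vec n) : inSigma x -> inSigma y ->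
  ip x y = (#|Pset x :&: Pset y| * 4)%N%:R - n%:R.
Proof.
move=> hx hy.
have co : forall i, x i * y i = ((i \in Pset x :&: Pset y) : nat)%:R *+ 4
   - ((i \in Pset x) : nat)%:R *+ 2 - ((i \in Pset y) : nat)%:R *+ 2 + 1.
  move=> i; rewrite (sigma_val hx i) (sigma_val hy i) in_setI.
  by case: (i \in Pset x); case: (i \in Pset y).
rewrite /ip (eq_bigr _ (fun i _ => co i)) big_split /= !sumrB !sumrMnl -!natr_sum !card_sum.
rewrite sumr_const card_ord -!mulrnA (sigma_card hx) (sigma_card hy).
by rewrite subrK.
Qed.
Lemma Pset_inj n (x y : vec n) : inSigma x -> inSigma y -> Pset x = Pset y -> x = y.
Proof.
move=> hx hy e; apply/ffunP => i; by rewrite (sigma_val hx) (sigma_val hy) e.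
Qed.

Theorem mainTheorem5 (n a p : nat) :
  (0 < n)%N -> (0 < a)%N -> (n %% 4 = 0)%N -> (a %% 4 = 0)%N -> (a < n)%N ->
  p = (a %/ 4 + n %/ 4)%N -> prime p ->
  forall Q : seq (vec n),
    uniq Q -> (forall x, x \in Q -> inSigma x) ->
    (\sum_(0 <= i < p) 'C(n, i) < size Q)%N ->
    exists x y, x \in Q /\ y \in Q /\ ip x y = (- (a%:Z))%R.
Proof.
move=> n0 a0 n4 a4 an pE pp Q uQ hQ hsz.
case: (boolP (has (fun x => has (fun y => ip x y == - a%:Z) Q) Q)).
  move=> /hasP [x xQ /hasP [y yQ /eqP e]]; by exists x, y.
move=> hno; exfalso.
set q := (n %/ 4)%N; set r := (a %/ 4)%N.
have nE : n = (q * 4)%N by rewrite {1}(divn_eq n 4) n4 addn0.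
have aE : a = (r * 4)%N by rewrite {1}(divn_eq a 4) a4 addn0.
have r0 : (0 < r)%N by move: a0; rewrite aE muln_gt0 => /andP[].
have rq : (r < q)%N by move: an; rewrite aE nE ltn_pmul2r.
set m := size Q.
set x0 : vec n := [ffun _ => 0].
set A := fun i : 'I_m => Pset (nth x0 Q i).
have QS : forall i : 'I_m, inSigma (nth x0 Q i) by move=> i; apply: hQ; apply: mem_nth.
have cA : forall i, #|A i| = (q * 2)%N.
  move=> i; have h := sigma_card (QS i); apply/eqP.
  by rewrite -(eqn_pmul2r (isT : (0 < 2)%N)) h -mulnA {1}nE.
have p0 : (0 < p)%N := prime_gt0 pp.
set c := (p.-1 * (q * 2).+1)%N.
set t := fun i k : 'I_m => #|A i :&: A k|.
have hno' : forall i k : 'I_m, ip (nth x0 Q i) (nth x0 Q k) != - a%:Z.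
  move=> i k; move/hasPn: hno => /(_ _ (mem_nth x0 (ltn_ord i))) /hasPn.
  by move=> /(_ _ (mem_nth x0 (ltn_ord k))).
have offd : forall i k : 'I_m, i != k -> ~~ (p %| (t i k + c).+1)%N.
  move=> i k ik; apply: (offdiag_arith (r := r)) => //.
  - rewrite ltn_neqAle -{2}(cA i) subset_leq_card ?subsetIl // andbT.
    apply/negP => /eqP; rewrite /t => h.
    have e1 : A i :&: A k = A i by apply/eqP; rewrite eqEcard subsetIl /= h cA leqnn.
    have e2 : A i :&: A k = A k by apply/eqP; rewrite eqEcard subsetIr /= h cA leqnn.
    have := Pset_inj (QS i) (QS k); rewrite -/(A i) -/(A k) -e1 e2 => /(_ erefl) /eqP.
    by rewrite nth_uniq // => /eqP /val_inj ik'; move: ik; rewrite ik' eqxx.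
  - apply/eqP => e.
    have e' : n = (t i k * 4 + a)%N by rewrite nE aE -e.
    have hn : (n%:R : int) = (t i k * 4)%N%:R + a%:R by rewrite -natrD -e'.
    move: (hno' i k); rewrite (ip_sigma (QS i) (QS k)) hn opprD addrA subrr add0r.
    by rewrite natz eqxx.
have diag : forall i, (p %| (t i i + c).+1)%N by move=> i; rewrite /t setIid cA diag_arith.
have chp : p \in [pchar 'F_p] := pchar_Fp pp.
pose Ss : pred {set 'I_n} := fun S => (#|S| < p)%N.
pose e := fun j : 'I_#|Ss| => (enum_val j : {set 'I_n}).
pose U : 'M['F_p]_(m, #|Ss|) := \matrix_(i, j)
   (((e j \subset A i) * 'C(c, p.-1 - #|e j|))%N%:R).
pose V : 'M['F_p]_(#|Ss|, m) := \matrix_(j, k) (((e j \subset A k) : nat)%:R).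
have key : forall i k, (\sum_(j < #|Ss|) (((e j \subset A i) * 'C(c, p.-1 - #|e j|))
      * (e j \subset A k)))%N = 'C(t i k + c, p.-1).
  move=> i k.
  rewrite -(big_enum_val (A := Ss) (fun S => (((S \subset A i) * 'C(c, p.-1 - #|S|))
      * (S \subset A k))%N)) /=.
  transitivity (\sum_(S : {set 'I_n} | (S \subset A i :&: A k) && (#|S| < p)%N)
     'C(c, p.-1 - #|S|))%N.
    rewrite big_mkcond [RHS]big_mkcond; apply: eq_bigr => S _.
    rewrite subsetI unfold_in /Ss.
    case: (S \subset A i); case: (S \subset A k); case: (#|S| < p)%N => //=;
      rewrite ?mul1n ?muln1 ?muln0 //.
  apply: eq_trans (sum_subsets (A i :&: A k) p (fun s : nat => binomial c (p.-1 - s)%N)) _.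
  have := binomial.Vandermonde (t i k) c p.-1; rewrite prednK // => <-.
  by apply: eq_bigr => s _; rewrite mulnC.
have UV : forall i k, (U *m V) i k = ('C(t i k + c, p.-1))%:R.
  move=> i k; rewrite mxE -key natr_sum; apply: eq_bigr => j _.
  by rewrite !mxE !natrM.
have Md : U *m V = diag_mx (\row_i ((binomial (t i i + c) p.-1)%:R : 'F_p)).
  apply/matrixP => i k; rewrite UV /diag_mx !mxE.
  case: eqVneq => [<-|ik]; first by rewrite mulr1n.
  rewrite mulr0n; apply/eqP; rewrite -(dvdn_pcharf chp) dvd_bin //; exact: offd.
have unit : U *m V \in unitmx.
  rewrite Md unitmxE det_diag unitfE; apply/prodf_neq0 => i _.
  by rewrite mxE -(dvdn_pcharf chp) dvd_bin // negbK; exact: diag.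
have hm : (m <= #|Ss|)%N.
  by rewrite -{1}(mxrank_unit unit) (leq_trans (mxrankM_maxl _ _)) // rank_leq_col.
have cardS : #|Ss| = (\sum_(0 <= i < p) 'C(n, i))%N.
  rewrite -sum1_card.
  rewrite (eq_bigl (fun S : {set 'I_n} => (S \subset [set: 'I_n]) && (#|S| < p)%N)); last first.
    by move=> S; rewrite subsetT unfold_in.
  apply: eq_trans (sum_subsets [set: 'I_n] p (fun _ => 1%N)) _.
  rewrite cardsT card_ord big_mkord; apply: eq_bigr => s _; by rewrite mul1n.
by move: hsz; rewrite -cardS ltnNge hm.
Qed.
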